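(* In the public goods model with $k\ge n$, for any $\alpha\in(0,1]$, any allocation that is $\alpha$-RRS is also $\alpha\cdot\frac{n}{2n-1}$-Prop. Further, when $n$ divides $k$, any $\alpha$-RRS allocation is $\alpha$-Prop.
   Context: Public goods model: agents $[n]$, goods $G=[m]$, integer $0\le k\le m$, nonnegative integer additive values $v_{ij}$, $v_i(S)=\sum_{j\in S}v_{ij}$; an allocation is $x\subseteq G$ with $|x|\le k$. $\mathrm{Prop}_i=\frac1n\max_{|y|\le k}v_i(y)$, $\mathrm{RRS}_i=\max_{|y|\le\lfloor k/n\rfloor}v_i(y)$. $x$ is $\beta$-RRS if $v_i(x)\ge\beta\,\mathrm{RRS}_i$ for all $i$, and $\beta$-Prop if $v_i(x)\ge\beta\,\mathrm{Prop}_i$ for all $i$. *)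

(* Defs.v *)
From mathcomp Require Import all_boot all_order all_algebra.
Set Implicit Arguments. Unset Strict Implicit. Unset Printing Implicit Defensive.
Import Order.TTheory GRing.Theory Num.Theory.

(* Public goods model: agents 'I_n, goods 'I_m, additive valuations
   v i j : nat.  An allocation is a set x of goods with #|x| <= k. *)

Definition val (n m : nat) (v : 'I_n -> 'I_m -> nat) (i : 'I_n) (S : {set 'I_m}) : nat :=
  \sum_(j in S) v i j.

Definition best (n m : nat) (v : 'I_n -> 'I_m -> nat) (i : 'I_n) (b : nat) : nat :=
  \max_(y : {set 'I_m} | #|y| <= b) val v i y.

Definition is_alloc (m k : nat) (x : {set 'I_m}) : bool := #|x| <= k.

Local Open Scope ring_scope.

Definition PropShare (n m k : nat) (v : 'I_n -> 'I_m -> nat) (i : 'I_n) : rat :=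
  (best v i k)%:R / n%:R.

Definition RRS (n m k : nat) (v : 'I_n -> 'I_m -> nat) (i : 'I_n) : rat :=
  (best v i (k %/ n)%N)%:R.

Definition is_beta_RRS (n m k : nat) (v : 'I_n -> 'I_m -> nat) (beta : rat)
  (x : {set 'I_m}) : Prop :=
  forall i : 'I_n, beta * RRS k v i <= (val v i x)%:R.

Definition is_beta_Prop (n m k : nat) (v : 'I_n -> 'I_m -> nat) (beta : rat)
  (x : {set 'I_m}) : Prop :=
  forall i : 'I_n, beta * PropShare k v i <= (val v i x)%:R.

(* Main.v *)
Require Import Defs.
From mathcomp Require Import all_boot all_order all_algebra.
From mathcomp Require Import zify.
Import Order.TTheory GRing.Theory Num.Theory.

Lemma chunk (n m : nat) (v : 'I_n -> 'I_m -> nat) (i : 'I_n) (q c : nat) :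
  forall y : {set 'I_m}, #|y| <= c * q -> Defs.val v i y <= c * best v i q.
Proof.
elim: c => [|c IH] y hy.
  move: hy; rewrite mul0n leqn0 cards_eq0 => /eqP ->.
  by rewrite /Defs.val big_set0.
have [hyq|hyq] := leqP #|y| q.
  apply: leq_trans (leq_pmull _ (ltn0Sn _)).
  exact: (@leq_bigmax_cond _ (fun y : {set 'I_m} => #|y| <= q) (fun y => Defs.val v i y)).
pose z := [set j in take q (enum y)].
have zy : z \subset y.
  by apply/subsetP => j; rewrite inE => /mem_take; rewrite mem_enum.
have cz : #|z| = q.
  rewrite cardsE (card_uniqP _) ?take_uniq ?enum_uniq // size_take -cardE.
  by rewrite hyq.
rewrite /Defs.val (big_setID z) /= (setIidPr zy) mulSn leq_add //.
  by apply: (@leq_bigmax_cond _ (fun y : {set 'I_m} => #|y| <= q) (fun y => Defs.val v i y)); rewrite cz.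
apply: IH; rewrite cardsD (setIidPr zy) cz leq_subLR.
by rewrite -mulSn.
Qed.

Lemma bestk (n m : nat) (v : 'I_n -> 'I_m -> nat) (i : 'I_n) (q c k : nat) :
  k <= c * q -> best v i k <= c * best v i q.
Proof.
move=> h; apply/bigmax_leqP => y hy; apply: chunk.
exact: leq_trans hy h.
Qed.

Local Open Scope ring_scope.

Theorem lemma2 (n m k : nat) (v : 'I_n -> 'I_m -> nat) (alpha : rat)
  (x : {set 'I_m}) :
  (0 < n)%N -> (n <= k)%N -> (k <= m)%N ->
  0 < alpha -> alpha <= 1 ->
  is_alloc k x ->
  is_beta_RRS k v alpha x ->
  is_beta_Prop k v (alpha * (n%:R / (2 * n - 1)%N%:R)) x /\
  ((n %| k)%N -> is_beta_Prop k v alpha x).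
Proof.
move=> n0 nk km a0 a1 _ hR.
have key : forall c, (k <= c * (k %/ n))%N -> (0 < c)%N ->
   forall i, alpha * (n%:R / c%:R) * PropShare k v i <= (Defs.val v i x)%:R.
  move=> c hc c0 i; apply: le_trans (hR i).
  rewrite /PropShare /RRS -mulrA ler_pM2l //.
  have nP : (0 : rat) < n%:R by rewrite ltr0n.
  have cP : (0 : rat) < c%:R by rewrite ltr0n.
  rewrite mulrC mulrA divfK ?gt_eqF //.
  rewrite ler_pdivrMr // -natrM ler_nat mulnC.
  exact: bestk.
split.
  apply: key; last by rewrite subn_gt0; lia.
  have q0 : (0 < k %/ n)%N by rewrite divn_gt0.
  rewrite {1}(divn_eq k n).
  have := ltn_pmod k n0; nia.
move=> /dvdnP [q kq].
move=> i; have h : (k <= n * (k %/ n))%N by rewrite kq mulnK // mulnC.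
have := key n h n0 i.
by rewrite divff ?mulr1 // pnatr_eq0 -lt0n.
Qed.
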